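(* Let $k$ be a commutative ring, $(H,\alpha)$ a monoidal Hom-Hopf algebra, $(A,\beta)$ a right $(H,\alpha)$-Hom-comodule algebra with a total integral $\phi:H\to A$ which is multiplicative ($\phi(hg)=\phi(h)\phi(g)$), and $(M,\mu)$ a relative Hom-Hopf module. Let $M_0=\{m\in M:\rho_M(m)=\mu^{-1}(m)\otimes 1_H\}$ and $C=\{b\in A:\rho_A(b)=\beta^{-1}(b)\otimes1_H\}$, and let $\tau_M:M\to M$, $\tau_M(m)=m_{[0]}\cdot\phi(S(m_{[1]}))$. Then: (1) $\tau_M(m)\in M_0$ for all $m\in M$, and $\tau_M|_{M_0}=\mathrm{id}_{M_0}$; (2) $\tau_A:A\to C$, $b\mapsto b_{[0]}\phi(S(b_{[1]}))$, is a morphism of left $(C,\beta)$-Hom-modules (via multiplication in $A$), so that $(C,\beta)$ is a direct summand of $(A,\beta)$ as a left $(C,\beta)$-Hom-module; (3) if moreover $\phi(H)\subseteq Z(A)$, then $\tau_M$ is a morphism of right $(C,\beta)$-Hom-modules, and the exact sequence $(M,\mu)\xrightarrow{\tau_M}(M_0,\mu)\to0$ splits as a sequence of right $(C,\beta)$-Hom-modules.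
   Context: Hom-category: objects $(M,\mu)$ with $\mu$ a $k$-linear automorphism; morphisms commute with the automorphisms. Monoidal Hom-algebra $(A,\alpha)$: $\alpha(ab)=\alpha(a)\alpha(b)$, $\alpha(1_A)=1_A$, $\alpha(a)(bc)=(ab)\alpha(c)$, $a1_A=1_Aa=\alpha(a)$. Monoidal Hom-coalgebra $(C,\gamma)$: $\Delta(c)=c_{(1)}\otimes c_{(2)}$, $\varepsilon$, $\Delta\gamma=(\gamma\otimes\gamma)\Delta$, $\varepsilon\gamma=\varepsilon$, $\gamma^{-1}(c_{(1)})\otimes c_{(2)(1)}\otimes c_{(2)(2)}=c_{(1)(1)}\otimes c_{(1)(2)}\otimes\gamma(c_{(2)})$, $\varepsilon(c_{(1)})c_{(2)}=\varepsilon(c_{(2)})c_{(1)}=\gamma^{-1}(c)$. Monoidal Hom-Hopf algebra $(H,\alpha)$: both, $\Delta,\varepsilon$ multiplicative and unital, antipode $S$ with $S(h_{(1)})h_{(2)}=h_{(1)}S(h_{(2)})=\varepsilon(h)1_H$, $S\alpha=\alpha S$. Right $(A,\beta)$-Hom-module: $(m\cdot a)\cdot\beta(b)=\mu(m)\cdot(ab)$, $m\cdot1_A=\mu(m)$, $\mu(m\cdot a)=\mu(m)\cdot\beta(a)$ (left modules analogously). Right $(H,\alpha)$-Hom-comodule: $\rho(m)=m_{[0]}\otimes m_{[1]}$, $m_{[0][0]}\otimes m_{[0][1]}\otimes\alpha^{-1}(m_{[1]})=\mu^{-1}(m_{[0]})\otimes\Delta(m_{[1]})$, $m_{[0]}\varepsilon(m_{[1]})=\mu^{-1}(m)$,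 $\rho(\mu(m))=\mu(m_{[0]})\otimes\alpha(m_{[1]})$. Right Hom-comodule algebra $(A,\beta)$: $\rho(ab)=a_{[0]}b_{[0]}\otimes a_{[1]}b_{[1]}$, $\rho(1_A)=1_A\otimes1_H$. Relative Hom-Hopf module: right $(A,\beta)$-Hom-module and right $(H,\alpha)$-Hom-comodule with $\rho(m\cdot a)=m_{[0]}\cdot a_{[0]}\otimes m_{[1]}a_{[1]}$. Total integral: $k$-linear $\phi:H\to A$ with $\rho_A\phi=(\phi\otimes\mathrm{id})\Delta$, $\phi\alpha=\beta\phi$, $\phi(1_H)=1_A$. $Z(A)$ is the center of $A$. $C$ is a Hom-subalgebra of $A$ and $(M_0,\mu|_{M_0})$ is a right $(C,\beta)$-Hom-module. *)

(* Defs.v *)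
From HB Require Import structures.
From mathcomp Require Import all_boot all_algebra.
Set Implicit Arguments. Unset Strict Implicit. Unset Printing Implicit Defensive.
Import GRing.Theory.
Local Open Scope ring_scope.

(* Tensors are represented by finite sums of simple tensors (sequences of   *)
(* pairs/triples); two such representatives denote the same element of the *)
(* tensor product iff every bilinear (resp. trilinear) map into every       *)
(* k-module agrees on them (universal property of the tensor product).     *)

Section HomDefs.
Variable k : comPzRingType.

Definition klinear (U V : lmodType k) (f : U -> V) : Prop :=
  forall (a : k) (x y : U), f (a *: x + y) = a *: f x + f y.

Definition klinear_form (U : lmodType k) (f : U -> k) : Prop :=
  forall (a : k) (x y : U), f (a *: x + y) = a * f x + f y.

Definition bilinear_map (U V W : lmodType k) (f : U -> V -> W) : Prop :=
  (forall y, klinear (fun x => f x y)) /\ (forall x, klinear (f x)).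

Definition trilinear_map (U V W P : lmodType k) (f : U -> V -> W -> P) : Prop :=
  [/\ forall y z, klinear (fun x => f x y z),
      forall x z, klinear (fun y => f x y z) &
      forall x y, klinear (f x y)].

Definition teq2 (U V : lmodType k) (s t : seq (U * V)) : Prop :=
  forall (W : lmodType k) (f : U -> V -> W), bilinear_map f ->
    \sum_(x <- s) f x.1 x.2 = \sum_(x <- t) f x.1 x.2.

Definition teq3 (U V W : lmodType k) (s t : seq (U * V * W)) : Prop :=
  forall (P : lmodType k) (f : U -> V -> W -> P), trilinear_map f ->
    \sum_(x <- s) f x.1.1 x.1.2 x.2 = \sum_(x <- t) f x.1.1 x.1.2 x.2.

Definition hom_aut (U : lmodType k) (mu muinv : U -> U) : Prop :=
  [/\ klinear mu, cancel mu muinv & cancel muinv mu].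

Definition tlinear (U V : lmodType k) (d : U -> seq (U * V)) : Prop :=
  forall (a : k) (x y : U),
    teq2 (d (a *: x + y)) ([seq (a *: p.1, p.2) | p <- d x] ++ d y).

Definition hom_algebra (A : lmodType k) (mul : A -> A -> A) (one : A)
    (beta betainv : A -> A) : Prop :=
  [/\ hom_aut beta betainv, bilinear_map mul,
      forall a b, beta (mul a b) = mul (beta a) (beta b),
      beta one = one &
      (forall a b c, mul (beta a) (mul b c) = mul (mul a b) (beta c)) /\
      (forall a, mul a one = beta a /\ mul one a = beta a)].

Definition hom_coalgebra (C : lmodType k) (Delta : C -> seq (C * C))
    (eps : C -> k) (g ginv : C -> C) : Prop :=
  [/\ hom_aut g ginv, tlinear Delta, klinear_form eps,
      forall c, teq2 (Delta (g c)) [seq (g p.1, g p.2) | p <- Delta c] &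
      [/\ forall c, eps (g c) = eps c,
          forall c, teq3 [seq (ginv p.1, q.1, q.2) | p <- Delta c, q <- Delta p.2]
                         [seq (q.1, q.2, g p.2) | p <- Delta c, q <- Delta p.1] &
          forall c, \sum_(p <- Delta c) eps p.1 *: p.2 = ginv c /\
                    \sum_(p <- Delta c) eps p.2 *: p.1 = ginv c]].

Definition hom_hopf (H : lmodType k) (mul : H -> H -> H) (one : H)
    (Delta : H -> seq (H * H)) (eps : H -> k) (alpha alphainv S : H -> H) : Prop :=
  [/\ hom_algebra mul one alpha alphainv, hom_coalgebra Delta eps alpha alphainv,
      (forall h g, teq2 (Delta (mul h g))
                        [seq (mul p.1 q.1, mul p.2 q.2) | p <- Delta h, q <- Delta g]) /\
      teq2 (Delta one) [:: (one, one)],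
      (forall h g, eps (mul h g) = eps h * eps g) /\ eps one = 1 &
      [/\ klinear S,
          forall h, \sum_(p <- Delta h) mul (S p.1) p.2 = eps h *: one /\
                    \sum_(p <- Delta h) mul p.1 (S p.2) = eps h *: one &
          forall h, S (alpha h) = alpha (S h)]].

Definition right_hom_module (A : lmodType k) (mulA : A -> A -> A) (oneA : A)
    (beta : A -> A) (M : lmodType k) (mu muinv : M -> M) (act : M -> A -> M) : Prop :=
  [/\ hom_aut mu muinv, bilinear_map act,
      forall m a b, act (act m a) (beta b) = act (mu m) (mulA a b),
      forall m, act m oneA = mu m &
      forall m a, mu (act m a) = act (mu m) (beta a)].

Definition right_hom_comodule (H : lmodType k) (Delta : H -> seq (H * H))
    (eps : H -> k) (alpha alphainv : H -> H)
    (M : lmodType k) (mu muinv : M -> M) (rho : M -> seq (M * H)) : Prop :=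
  [/\ hom_aut mu muinv, tlinear rho,
      forall m, teq3 [seq (q.1, q.2, alphainv p.2) | p <- rho m, q <- rho p.1]
                     [seq (muinv p.1, q.1, q.2) | p <- rho m, q <- Delta p.2],
      forall m, \sum_(p <- rho m) eps p.2 *: p.1 = muinv m &
      forall m, teq2 (rho (mu m)) [seq (mu p.1, alpha p.2) | p <- rho m]].

Definition right_hom_comodule_algebra (H : lmodType k) (mulH : H -> H -> H) (oneH : H)
    (Delta : H -> seq (H * H)) (eps : H -> k) (alpha alphainv : H -> H)
    (A : lmodType k) (mulA : A -> A -> A) (oneA : A) (beta betainv : A -> A)
    (rhoA : A -> seq (A * H)) : Prop :=
  [/\ hom_algebra mulA oneA beta betainv,
      right_hom_comodule Delta eps alpha alphainv beta betainv rhoA,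
      forall a b, teq2 (rhoA (mulA a b))
                       [seq (mulA p.1 q.1, mulH p.2 q.2) | p <- rhoA a, q <- rhoA b] &
      teq2 (rhoA oneA) [:: (oneA, oneH)]].

Definition relative_hom_hopf_module (H : lmodType k) (mulH : H -> H -> H)
    (Delta : H -> seq (H * H)) (eps : H -> k) (alpha alphainv : H -> H)
    (A : lmodType k) (mulA : A -> A -> A) (oneA : A) (beta : A -> A)
    (rhoA : A -> seq (A * H))
    (M : lmodType k) (mu muinv : M -> M) (act : M -> A -> M)
    (rhoM : M -> seq (M * H)) : Prop :=
  [/\ right_hom_module mulA oneA beta mu muinv act,
      right_hom_comodule Delta eps alpha alphainv mu muinv rhoM &
      forall m a, teq2 (rhoM (act m a))
                       [seq (act p.1 q.1, mulH p.2 q.2) | p <- rhoM m, q <- rhoA a]].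

Definition total_integral (H : lmodType k) (oneH : H) (Delta : H -> seq (H * H))
    (alpha : H -> H) (A : lmodType k) (oneA : A) (beta : A -> A)
    (rhoA : A -> seq (A * H)) (phi : H -> A) : Prop :=
  [/\ klinear phi,
      forall h, teq2 (rhoA (phi h)) [seq (phi p.1, p.2) | p <- Delta h],
      forall h, phi (alpha h) = beta (phi h) &
      phi oneH = oneA].

Definition coinv (H M : lmodType k) (oneH : H) (muinv : M -> M)
    (rho : M -> seq (M * H)) (m : M) : Prop :=
  teq2 (rho m) [:: (muinv m, oneH)].

Definition tau (H A M : lmodType k) (act : M -> A -> M) (phi : H -> A) (S : H -> H)
    (rho : M -> seq (M * H)) (m : M) : M :=
  \sum_(p <- rho m) act p.1 (phi (S p.2)).

End HomDefs.

(* Main.v *)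
Require Import Defs.
From HB Require Import structures.
From mathcomp Require Import all_boot all_algebra.
Set Implicit Arguments. Unset Strict Implicit. Unset Printing Implicit Defensive.
Import GRing.Theory.
Local Open Scope ring_scope.

Section Lin.
Variable k : comPzRingType.
Implicit Types U V W X : lmodType k.

Lemma kl0 U W (f : U -> W) : klinear f -> f 0 = 0.
Proof.
move=> hf; have := hf 1 0 0; rewrite !scale1r addr0 => /esym/eqP.
by rewrite -subr_eq0 addrK => /eqP.
Qed.

Lemma klD U W (f : U -> W) x y : klinear f -> f (x + y) = f x + f y.
Proof. by move=> hf; have := hf 1 x y; rewrite !scale1r. Qed.

Lemma klZ U W (f : U -> W) a x : klinear f -> f (a *: x) = a *: f x.
Proof. by move=> hf; rewrite -[a *: x]addr0 hf kl0 // addr0. Qed.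

Lemma klN U W (f : U -> W) x : klinear f -> f (- x) = - f x.
Proof. by move=> hf; rewrite -scaleN1r klZ // scaleN1r. Qed.

Lemma klB U W (f : U -> W) x y : klinear f -> f (x - y) = f x - f y.
Proof. by move=> hf; rewrite klD // klN. Qed.

Lemma kl_sum U W (f : U -> W) I (s : seq I) (F : I -> U) :
  klinear f -> f (\sum_(i <- s) F i) = \sum_(i <- s) f (F i).
Proof.
move=> hf; elim: s => [|i s IH]; first by rewrite !big_nil kl0.
by rewrite !big_cons klD // IH.
Qed.

Lemma scale_sum W I (s : seq I) (F : I -> W) a :
  a *: \sum_(i <- s) F i = \sum_(i <- s) a *: F i.
Proof.
elim: s => [|i s IH]; first by rewrite !big_nil scaler0.
by rewrite !big_cons scalerDr IH.
Qed.

Lemma kl_comp U V W (g : V -> W) (h : U -> V) :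
  klinear g -> klinear h -> klinear (fun x => g (h x)).
Proof. by move=> hg hh a x y; rewrite hh hg. Qed.

Lemma kl_id U : klinear (fun x : U => x).
Proof. by []. Qed.

Lemma kl_sumf U W I (s : seq I) (F : I -> U -> W) :
  (forall i, klinear (F i)) -> klinear (fun x => \sum_(i <- s) F i x).
Proof.
move=> hF a x y; rewrite scale_sum -big_split /=.
by apply: eq_bigr => i _; rewrite hF.
Qed.

Lemma kl_scalef U W (g : U -> W) c : klinear g -> klinear (fun x => c *: g x).
Proof. by move=> hg a x y; rewrite hg scalerDr !scalerA mulrC. Qed.

Lemma kl_add U W (g h : U -> W) : klinear g -> klinear h -> klinear (fun x => g x + h x).
Proof. by move=> hg hh a x y; rewrite hg hh scalerDr addrACA. Qed.

Lemma bl1 U V W (f : U -> V -> W) y : bilinear_map f -> klinear (fun x => f x y).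
Proof. by case=> h _; apply: h. Qed.

Lemma bl2 U V W (f : U -> V -> W) x : bilinear_map f -> klinear (f x).
Proof. by case=> _ h; apply: h. Qed.

Lemma bl_comp U V U' V' W (f : U -> V -> W) (L1 : U' -> U) (L2 : V' -> V) :
  bilinear_map f -> klinear L1 -> klinear L2 ->
  bilinear_map (fun a b => f (L1 a) (L2 b)).
Proof.
move=> hf h1 h2; split=> [y|x].
  exact: (kl_comp (g := fun u => f u (L2 y)) (bl1 _ hf) h1).
exact: (kl_comp (g := f (L1 x)) (bl2 _ hf) h2).
Qed.

Lemma bl_sum U V W I (s : seq I) (G : I -> U -> V -> W) :
  (forall i, bilinear_map (G i)) -> bilinear_map (fun a b => \sum_(i <- s) G i a b).
Proof.
move=> hG; split=> [y|x].
  by apply: kl_sumf => i; apply: bl1.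
by apply: kl_sumf => i; apply: bl2.
Qed.

Lemma bl_scale U V W (G : U -> V -> W) c :
  bilinear_map G -> bilinear_map (fun a b => c *: G a b).
Proof.
move=> hG; split=> [y|x].
  exact: (kl_scalef c (bl1 y hG)).
exact: (kl_scalef c (bl2 x hG)).
Qed.

Lemma bl_swap U V W (f : U -> V -> W) : bilinear_map f -> bilinear_map (fun b a => f a b).
Proof. by case=> h1 h2; split. Qed.

Lemma ev_lin U V W (d : U -> seq (U * V)) (f : U -> V -> W) :
  tlinear d -> bilinear_map f -> klinear (fun u => \sum_(p <- d u) f p.1 p.2).
Proof.
move=> hd hf a x y; rewrite (hd a x y W f hf) big_cat big_map /= scale_sum.
congr (_ + _); apply: eq_bigr => p _; exact: klZ (bl1 _ hf).
Qed.

End Lin.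

Lemma kl_inv (k : comPzRingType) (U : lmodType k) (f g : U -> U) :
  klinear f -> cancel f g -> cancel g f -> klinear g.
Proof. by move=> hf fK gK a x y; apply: (can_inj fK); rewrite hf !gK. Qed.


Section HH.
Variables (k : comPzRingType) (H : lmodType k) (mul : H -> H -> H) (one : H)
  (Delta : H -> seq (H * H)) (eps : H -> k) (alpha alphainv S : H -> H).
Hypothesis hH : hom_hopf mul one Delta eps alpha alphainv S.

Lemma aL : klinear alpha. Proof. by case: hH => [[[]]]. Qed.
Lemma aK : cancel alpha alphainv. Proof. by case: hH => [[[]]]. Qed.
Lemma aKV : cancel alphainv alpha. Proof. by case: hH => [[[]]]. Qed.
Lemma mB : bilinear_map mul. Proof. by case: hH => [[]]. Qed.
Lemma amul a b : alpha (mul a b) = mul (alpha a) (alpha b). Proof. by case: hH => [[]]. Qed.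
Lemma a1 : alpha one = one. Proof. by case: hH => [[]]. Qed.
Lemma massoc a b c : mul (alpha a) (mul b c) = mul (mul a b) (alpha c).
Proof. by case: hH => [[_ _ _ _ [h _]]]. Qed.
Lemma hmulr1 a : mul a one = alpha a. Proof. by case: hH => [[_ _ _ _ [_ h]]]; case: (h a). Qed.
Lemma hmul1r a : mul one a = alpha a. Proof. by case: hH => [[_ _ _ _ [_ h]]]; case: (h a). Qed.
Lemma DL : tlinear Delta. Proof. by case: hH => [_ []]. Qed.
Lemma eL : klinear_form eps. Proof. by case: hH => [_ []]. Qed.
Lemma Dalpha c : teq2 (Delta (alpha c)) [seq (alpha p.1, alpha p.2) | p <- Delta c].
Proof. by case: hH => [_ []]. Qed.
Lemma eps_alpha c : eps (alpha c) = eps c. Proof. by case: hH => [_ [_ _ _ _ []]]. Qed.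
Lemma coa c : teq3 [seq (alphainv p.1, q.1, q.2) | p <- Delta c, q <- Delta p.2]
                   [seq (q.1, q.2, alpha p.2) | p <- Delta c, q <- Delta p.1].
Proof. by case: hH => [_ [_ _ _ _ []]]. Qed.
Lemma cu1 c : \sum_(p <- Delta c) eps p.1 *: p.2 = alphainv c.
Proof. by case: hH => [_ [_ _ _ _ [_ _ h]]]; case: (h c). Qed.
Lemma cu2 c : \sum_(p <- Delta c) eps p.2 *: p.1 = alphainv c.
Proof. by case: hH => [_ [_ _ _ _ [_ _ h]]]; case: (h c). Qed.
Lemma Dmul h g : teq2 (Delta (mul h g))
   [seq (mul p.1 q.1, mul p.2 q.2) | p <- Delta h, q <- Delta g].
Proof. by case: hH => [_ _ [h' _]]. Qed.
Lemma D1 : teq2 (Delta one) [:: (one, one)]. Proof. by case: hH => [_ _ [_ h']]. Qed.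
Lemma SL : klinear S. Proof. by case: hH => [_ _ _ _ []]. Qed.
Lemma ant1 h : \sum_(p <- Delta h) mul (S p.1) p.2 = eps h *: one.
Proof. by case: hH => [_ _ _ _ [_ a _]]; case: (a h). Qed.
Lemma ant2 h : \sum_(p <- Delta h) mul p.1 (S p.2) = eps h *: one.
Proof. by case: hH => [_ _ _ _ [_ a _]]; case: (a h). Qed.
Lemma Salpha h : S (alpha h) = alpha (S h). Proof. by case: hH => [_ _ _ _ [_ _ a]]. Qed.

Lemma eps0 : eps 0 = 0.
Proof.
have := eL 1 0 0; rewrite scale1r addr0 mul1r => /esym/eqP.
by rewrite -subr_eq0 addrK => /eqP.
Qed.
Lemma epsD x y : eps (x + y) = eps x + eps y.
Proof. by have := eL 1 x y; rewrite scale1r mul1r. Qed.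
Lemma epsZ a x : eps (a *: x) = a * eps x.
Proof. by rewrite -[a *: x]addr0 eL eps0 addr0. Qed.
Lemma eps_sum I (s : seq I) (F : I -> H) : eps (\sum_(i <- s) F i) = \sum_(i <- s) eps (F i).
Proof. elim: s => [|i s IH]; first by rewrite !big_nil eps0. by rewrite !big_cons epsD IH. Qed.

Lemma aiL : klinear alphainv.
Proof. by move=> a x y; apply: (can_inj aK); rewrite aL !aKV. Qed.

Lemma coassE (P : lmodType k) (T : H -> H -> H -> P) c : trilinear_map T ->
  \sum_(p <- Delta c) \sum_(q <- Delta p.2) T (alphainv p.1) q.1 q.2 =
  \sum_(p <- Delta c) \sum_(q <- Delta p.1) T q.1 q.2 (alpha p.2).
Proof. by move=> hT; have := coa c hT; rewrite !big_allpairs_dep /=. Qed.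

Lemma eps_ainv c : eps (alphainv c) = eps c.
Proof. by rewrite -{2}(aKV c) eps_alpha. Qed.

Lemma ainvE x : alphainv x = alpha x.
Proof.
pose T := fun a b c : H => eps a *: (eps b *: c).
have hT : trilinear_map T.
  split=> [y z|x' z|x' y] a u v; rewrite /T.
  - by rewrite eL scalerDl !scalerA.
  - by rewrite eL scalerDl scalerDr !scalerA mulrCA mulrA.
  - by rewrite !scalerDr !scalerA (mulrC a) mulrAC.
have := coassE x hT; rewrite /T.
have -> : \sum_(p <- Delta x) \sum_(q <- Delta p.2) eps (alphainv p.1) *: (eps q.1 *: q.2)
        = alphainv (alphainv x).
  rewrite -(cu1 x) (kl_sum _ _ aiL); apply: eq_bigr => p _.
  by rewrite -scale_sum cu1 (klZ _ _ aiL) eps_ainv.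
have -> : \sum_(p <- Delta x) \sum_(q <- Delta p.1) eps q.1 *: (eps q.2 *: alpha p.2) = x.
  rewrite -[RHS](aKV x) -(cu1 x) (kl_sum _ _ aL); apply: eq_bigr => p _.
  rewrite (klZ _ _ aL); under eq_bigr do rewrite scalerA.
  rewrite -scaler_suml; congr (_ *: _).
  by rewrite -eps_ainv -cu1 eps_sum; apply: eq_bigr => q _; rewrite epsZ.
by move=> h; rewrite -{2}h aKV.
Qed.

End HH.


Section Conv.
Variables (k : comPzRingType) (H : lmodType k) (mul : H -> H -> H) (one : H)
  (Delta : H -> seq (H * H)) (eps : H -> k) (alpha alphainv S : H -> H).
Hypothesis hH : hom_hopf mul one Delta eps alpha alphainv S.

Notation ev f s := (\sum_(x <- s) f x.1 x.2).
Notation T2 := (seq (H * H)).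

Definition tmul (X Y : T2) : T2 := [seq (mul x.1 y.1, mul x.2 y.2) | x <- X, y <- Y].
Definition tmap (g : H -> H) (X : T2) : T2 := [seq (g x.1, g x.2) | x <- X].
Definition Eu (h : H) : T2 := [:: (eps h *: one, one)].
Definition conv (P Q : H -> T2) h : T2 := flatten [seq tmul (P p.1) (Q p.2) | p <- Delta h].
Definition evlin (P : H -> T2) := forall (W : lmodType k) (f : H -> H -> W),
  bilinear_map f -> klinear (fun a => ev f (P a)).

Let aL := aL hH.
Let mB := mB hH.
Lemma aa x : alpha (alpha x) = x. Proof. by rewrite -{2}(aK hH x) (ainvE hH). Qed.
Lemma mulL c : klinear (fun a => mul a c). Proof. exact: bl1 mB. Qed.
Lemma mulR c : klinear (mul c). Proof. exact: bl2 mB. Qed.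

Lemma coassA (P : lmodType k) (T : H -> H -> H -> P) c : trilinear_map T ->
  \sum_(p <- Delta c) \sum_(q <- Delta p.2) T (alpha p.1) q.1 q.2 =
  \sum_(p <- Delta c) \sum_(q <- Delta p.1) T q.1 q.2 (alpha p.2).
Proof.
move=> hT; rewrite -(coassE hH c hT); apply: eq_bigr => p _.
by rewrite (ainvE hH).
Qed.

Lemma ev_tmul (W : lmodType k) (f : H -> H -> W) X Y :
  ev f (tmul X Y) = \sum_(x <- X) \sum_(y <- Y) f (mul x.1 y.1) (mul x.2 y.2).
Proof. by rewrite big_allpairs_dep. Qed.

Lemma ev_tmap (W : lmodType k) (f : H -> H -> W) g X : ev f (tmap g X) = \sum_(x <- X) f (g x.1) (g x.2).
Proof. by rewrite big_map. Qed.

Lemma ev_conv (W : lmodType k) (f : H -> H -> W) P Q h :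
  ev f (conv P Q h) = \sum_(p <- Delta h) ev f (tmul (P p.1) (Q p.2)).
Proof. by rewrite big_flatten big_map. Qed.

Lemma teq_refl (X : T2) : teq2 X X. Proof. by []. Qed.
Lemma teq_sym (X Y : T2) : teq2 X Y -> teq2 Y X.
Proof. by move=> h W f hf; rewrite h. Qed.
Lemma teq_trans (X Y Z : T2) : teq2 X Y -> teq2 Y Z -> teq2 X Z.
Proof. by move=> h1 h2 W f hf; rewrite h1 // h2. Qed.

Lemma teq_tmul X X' Y Y' : teq2 X X' -> teq2 Y Y' -> teq2 (tmul X Y) (tmul X' Y').
Proof.
move=> hX hY W f hf; rewrite !ev_tmul.
have hg : bilinear_map (fun a b => \sum_(y <- Y) f (mul a y.1) (mul b y.2)).
  by apply: bl_sum => y; apply: bl_comp => //; apply: mulL.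
rewrite (hX W _ hg); apply: eq_bigr => x _.
apply: (hY W (fun a b => f (mul x.1 a) (mul x.2 b))).
by apply: bl_comp => //; apply: mulR.
Qed.

Lemma teq_conv P P' Q Q' h : (forall x, teq2 (P x) (P' x)) -> (forall x, teq2 (Q x) (Q' x)) ->
  teq2 (conv P Q h) (conv P' Q' h).
Proof.
move=> hP hQ W f hf; rewrite !ev_conv; apply: eq_bigr => p _.
by apply: teq_tmul.
Qed.

Lemma teq_tmap g X X' : klinear g -> teq2 X X' -> teq2 (tmap g X) (tmap g X').
Proof.
move=> hg hX W f hf; rewrite !ev_tmap.
exact: (hX W (fun a b => f (g a) (g b)) (bl_comp hf hg hg)).
Qed.

Lemma tmap_aa X : teq2 (tmap alpha (tmap alpha X)) X.
Proof.
move=> W f hf; rewrite !big_map; apply: eq_bigr => x _; by rewrite /= !aa.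
Qed.

Lemma conv_unit_r P h : evlin P -> teq2 (conv P Eu h) (tmap alpha (P (alpha h))).
Proof.
move=> hP W f hf; rewrite ev_conv ev_tmap.
have hg := hP W _ (bl_comp hf aL aL).
transitivity (\sum_(p <- Delta h) eps p.2 *: ev (fun u v => f (alpha u) (alpha v)) (P p.1)).
  apply: eq_bigr => p _; rewrite ev_tmul scale_sum; apply: eq_bigr => x _.
  rewrite big_seq1 /= (klZ _ _ (mulR _)) !(hmulr1 hH).
  exact: (klZ _ _ (bl1 _ hf)).
rewrite -(ainvE hH h) -(cu2 hH h).
have /= -> := kl_sum (Delta h) (fun p => eps p.2 *: p.1) hg.
by apply: eq_bigr => p _; have /= -> := klZ (eps p.2) p.1 hg.
Qed.

Lemma conv_unit_l P h : evlin P -> teq2 (conv Eu P h) (tmap alpha (P (alpha h))).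
Proof.
move=> hP W f hf; rewrite ev_conv ev_tmap.
have hg := hP W _ (bl_comp hf aL aL).
transitivity (\sum_(p <- Delta h) eps p.1 *: ev (fun u v => f (alpha u) (alpha v)) (P p.2)).
  apply: eq_bigr => p _; rewrite ev_tmul big_seq1 scale_sum; apply: eq_bigr => x _.
  rewrite /= (klZ _ _ (mulL _)) !(hmul1r hH).
  exact: (klZ _ _ (bl1 _ hf)).
rewrite -(ainvE hH h) -(cu1 hH h).
have /= -> := kl_sum (Delta h) (fun p => eps p.1 *: p.2) hg.
by apply: eq_bigr => p _; have /= -> := klZ (eps p.1) p.2 hg.
Qed.


Lemma conv_assoc P Q R h : evlin P -> evlin Q -> evlin R ->
  teq2 (conv (fun x => tmap alpha (P (alpha x))) (conv Q R) h)
       (conv (conv P Q) (fun x => tmap alpha (R (alpha x))) h).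
Proof.
move=> hP hQ hR W f hf; rewrite !ev_conv.
pose T a b c := \sum_(x <- P a) \sum_(y <- Q b) \sum_(z <- R c)
   f (mul (alpha x.1) (mul y.1 z.1)) (mul (alpha x.2) (mul y.2 z.2)).
have hT : trilinear_map T.
  split=> [b c|a c|a b].
  - apply: (hP W (fun u v => \sum_(y <- Q b) \sum_(z <- R c)
       f (mul (alpha u) (mul y.1 z.1)) (mul (alpha v) (mul y.2 z.2)))).
    apply: bl_sum => y; apply: bl_sum => z; apply: bl_comp => //;
      exact: (kl_comp (mulL _) aL).
  - apply: kl_sumf => x.
    apply: (hQ W (fun u v => \sum_(z <- R c)
       f (mul (alpha x.1) (mul u z.1)) (mul (alpha x.2) (mul v z.2)))).
    apply: bl_sum => z; apply: bl_comp => //; exact: (kl_comp (mulR _) (mulL _)).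
  - apply: kl_sumf => x; apply: kl_sumf => y.
    apply: (hR W (fun u v => f (mul (alpha x.1) (mul y.1 u)) (mul (alpha x.2) (mul y.2 v)))).
    apply: bl_comp => //; exact: (kl_comp (mulR _) (mulR _)).
transitivity (\sum_(p <- Delta h) \sum_(q <- Delta p.2) T (alpha p.1) q.1 q.2).
  apply: eq_bigr => p _ /=; rewrite ev_tmul big_map.
  under eq_bigr => x _ do rewrite big_flatten big_map.
  rewrite exchange_big; apply: eq_bigr => r _ /=; rewrite /T.
  by apply: eq_bigr => x _; rewrite big_allpairs_dep.
rewrite (coassA _ hT); apply: eq_bigr => p _ /=.
rewrite ev_tmul big_flatten big_map; apply: eq_bigr => q _ /=.
rewrite big_allpairs_dep /T; apply: eq_bigr => x _; apply: eq_bigr => y _ /=.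
rewrite big_map; apply: eq_bigr => z _ /=.
by rewrite !(massoc hH).
Qed.

Definition Uf h := Delta (S h).
Definition Vf h : T2 := [seq (S p.2, S p.1) | p <- Delta h].
Let SL := SL hH.
Let DL := DL hH.

Lemma evlinD : evlin Delta. Proof. by move=> W f hf; exact: ev_lin DL hf. Qed.
Lemma evlinU : evlin Uf. Proof. by move=> W f hf; exact: (kl_comp (ev_lin DL hf) SL). Qed.
Lemma evlinV : evlin Vf.
Proof.
move=> W f hf a x y; rewrite !big_map.
exact: (ev_lin DL (bl_comp (bl_swap hf) SL SL) a x y).
Qed.

Lemma convUD h : teq2 (conv Uf Delta h) (Eu h).
Proof.
move=> W f hf; rewrite ev_conv big_seq1 /=.
transitivity (\sum_(p <- Delta h) ev f (Delta (mul (S p.1) p.2))).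
  by apply: eq_bigr => p _; symmetry; exact: (Dmul hH (S p.1) p.2 hf).
have /= <- := kl_sum (Delta h) (fun p => mul (S p.1) p.2) (ev_lin DL hf).
rewrite (ant1 hH); have /= -> := klZ (eps h) one (ev_lin DL hf).
by rewrite (D1 hH hf) big_seq1 /= (klZ _ _ (bl1 _ hf)).
Qed.

Lemma convDV h : teq2 (conv Delta Vf h) (Eu h).
Proof.
move=> W f hf; rewrite ev_conv big_seq1 /=.
pose T1 a b c := \sum_(d <- Delta (alpha a)) f (mul d.1 (S c)) (mul d.2 (S b)).
have hT1 : trilinear_map T1.
  split=> [b c|a c|a b].
  - exact: (kl_comp (ev_lin DL (bl_comp hf (mulL (S c)) (mulL (S b)))) aL).
  - by apply: kl_sumf => d; exact: (kl_comp (bl2 _ hf) (kl_comp (mulR _) SL)).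
  - by apply: kl_sumf => d; exact: (kl_comp (bl1 _ hf) (kl_comp (mulR _) SL)).
transitivity (\sum_(p <- Delta h) \sum_(q <- Delta p.2) T1 (alpha p.1) q.1 q.2).
  apply: eq_bigr => p _; rewrite ev_tmul.
  under eq_bigr => d _ do rewrite big_map.
  by rewrite exchange_big; apply: eq_bigr => q _; rewrite /T1 aa.
rewrite (coassA _ hT1) /T1.
transitivity (\sum_(p <- Delta h) f (alpha (mul p.1 (S p.2))) one); last first.
  have /= <- := kl_sum (Delta h) (fun p => mul p.1 (S p.2)) (kl_comp (bl1 one hf) aL).
  by rewrite (ant2 hH) (klZ _ _ aL) (a1 hH).
apply: eq_bigr => p _.
pose K u v w := f (mul (alpha u) (S (alpha p.2))) (mul (alpha v) (S w)).
transitivity (\sum_(q <- Delta p.1) \sum_(d <- Delta q.1) K d.1 d.2 q.2).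
  apply: eq_bigr => q _.
  rewrite (Dalpha hH q.1 (bl_comp hf (mulL (S (alpha p.2))) (mulL (S q.2)))).
  by rewrite big_map.
pose T2 u v w := K u v (alpha w).
have hT2 : trilinear_map T2.
  split=> [b c|a c|a b]; rewrite /T2 /K.
  - exact: (kl_comp (bl1 _ hf) (kl_comp (mulL _) aL)).
  - exact: (kl_comp (bl2 _ hf) (kl_comp (mulL _) aL)).
  - exact: (kl_comp (bl2 _ hf) (kl_comp (mulR _) (kl_comp SL aL))).
transitivity (\sum_(q <- Delta p.1) \sum_(d <- Delta q.1) T2 d.1 d.2 (alpha q.2)).
  by apply: eq_bigr => q _; apply: eq_bigr => d _; rewrite /T2 aa.
rewrite -(coassA _ hT2) /T2 /K.
transitivity (\sum_(q <- Delta p.1) eps q.2 *: f (mul q.1 (S (alpha p.2))) one).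
  apply: eq_bigr => q _; rewrite aa.
  transitivity (\sum_(r <- Delta q.2) f (mul q.1 (S (alpha p.2))) (alpha (mul r.1 (S r.2)))).
    by apply: eq_bigr => r _; rewrite (Salpha hH r.2) (amul hH).
  have /= <- := kl_sum (Delta q.2) (fun r => mul r.1 (S r.2)) (kl_comp (bl2 (mul q.1 (S (alpha p.2))) hf) aL).
  by rewrite (ant2 hH) (klZ _ _ aL) (a1 hH) (klZ _ _ (bl2 _ hf)).
have hl : klinear (fun u => f (mul u (S (alpha p.2))) one).
  exact: (kl_comp (bl1 _ hf) (mulL _)).
have /= := kl_sum (Delta p.1) (fun q => eps q.2 *: q.1) hl.
rewrite (cu2 hH) (ainvE hH) (amul hH) -(Salpha hH) => ->.
apply: eq_bigr => q _; have /= -> := klZ (eps q.2) q.1 hl.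
by [].
Qed.

Lemma Uf_alpha x : teq2 (Uf (alpha x)) (tmap alpha (Uf x)).
Proof. rewrite /Uf (Salpha hH). exact: (Dalpha hH). Qed.

Lemma Vf_alpha x : teq2 (Vf (alpha x)) (tmap alpha (Vf x)).
Proof.
move=> W f hf; rewrite /Vf !big_map /=.
rewrite (Dalpha hH x (bl_comp (bl_swap hf) SL SL)) big_map; apply: eq_bigr => p _ /=.
by rewrite !(Salpha hH).
Qed.

Lemma Ua x : teq2 (Uf x) (tmap alpha (Uf (alpha x))).
Proof. exact: teq_trans (teq_sym (tmap_aa (Uf x))) (teq_tmap aL (teq_sym (Uf_alpha x))). Qed.

Lemma Va x : teq2 (Vf x) (tmap alpha (Vf (alpha x))).
Proof. exact: teq_trans (teq_sym (tmap_aa (Vf x))) (teq_tmap aL (teq_sym (Vf_alpha x))). Qed.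

Lemma anti_comult h : teq2 (Uf h) (Vf h).
Proof.
apply: teq_trans (Ua h) _.
apply: teq_trans (teq_sym (conv_unit_r h evlinU)) _.
apply: teq_trans (teq_conv (P' := fun x => tmap alpha (Uf (alpha x))) (Q' := conv Delta Vf) h
                   Ua (fun x => teq_sym (convDV x))) _.
apply: teq_trans (conv_assoc h evlinU evlinD evlinV) _.
apply: teq_trans (teq_conv (P' := Eu) (Q' := Vf) h convUD (fun x => teq_sym (Va x))) _.
exact: teq_trans (conv_unit_l h evlinV) (teq_sym (Va h)).
Qed.

Lemma anti_comultE (W : lmodType k) (f : H -> H -> W) h : bilinear_map f ->
  \sum_(q <- Delta (S h)) f q.1 q.2 = \sum_(q <- Delta h) f (S q.2) (S q.1).
Proof. by move=> hf; rewrite (anti_comult h hf) big_map. Qed.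

End Conv.


Section Mod.
Variables (k : comPzRingType) (H : lmodType k) (mulH : H -> H -> H) (oneH : H)
  (Delta : H -> seq (H * H)) (eps : H -> k) (alpha alphainv S : H -> H).
Hypothesis hH : hom_hopf mulH oneH Delta eps alpha alphainv S.
Variables (A : lmodType k) (mulA : A -> A -> A) (oneA : A) (beta betainv : A -> A)
  (rhoA : A -> seq (A * H)).
Hypothesis hA : right_hom_comodule_algebra mulH oneH Delta eps alpha alphainv
          mulA oneA beta betainv rhoA.
Variable phi : H -> A.
Hypothesis hphi : total_integral oneH Delta alpha oneA beta rhoA phi.
Variables (M : lmodType k) (mu muinv : M -> M) (act : M -> A -> M) (rhoM : M -> seq (M * H)).
Hypothesis hM : relative_hom_hopf_module mulH Delta eps alpha alphainv
          mulA oneA beta rhoA mu muinv act rhoM.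

Lemma phiL : klinear phi. Proof. by case: hphi. Qed.
Lemma phi_rho h : teq2 (rhoA (phi h)) [seq (phi p.1, p.2) | p <- Delta h].
Proof. by case: hphi. Qed.
Lemma phi_alpha h : phi (alpha h) = beta (phi h). Proof. by case: hphi. Qed.
Lemma phi1 : phi oneH = oneA. Proof. by case: hphi. Qed.

Lemma muL : klinear mu. Proof. by case: hM => [[[]]]. Qed.
Lemma muK : cancel mu muinv. Proof. by case: hM => [[[]]]. Qed.
Lemma muKV : cancel muinv mu. Proof. by case: hM => [[[]]]. Qed.
Lemma actB : bilinear_map act. Proof. by case: hM => [[]]. Qed.
Lemma act_assoc m a b : act (act m a) (beta b) = act (mu m) (mulA a b).
Proof. by case: hM => [[]]. Qed.
Lemma act1 m : act m oneA = mu m. Proof. by case: hM => [[]]. Qed.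
Lemma mu_act m a : mu (act m a) = act (mu m) (beta a). Proof. by case: hM => [[]]. Qed.
Lemma rhoL : tlinear rhoM. Proof. by case: hM => [_ []]. Qed.
Lemma rho_coa m : teq3 [seq (q.1, q.2, alphainv p.2) | p <- rhoM m, q <- rhoM p.1]
                     [seq (muinv p.1, q.1, q.2) | p <- rhoM m, q <- Delta p.2].
Proof. by case: hM => [_ []]. Qed.
Lemma rho_mu m : teq2 (rhoM (mu m)) [seq (mu p.1, alpha p.2) | p <- rhoM m].
Proof. by case: hM => [_ []]. Qed.
Lemma rho_act m a : teq2 (rhoM (act m a))
                       [seq (act p.1 q.1, mulH p.2 q.2) | p <- rhoM m, q <- rhoA a].
Proof. by case: hM. Qed.

Lemma eps1 : eps oneH = 1. Proof. by case: hH => [_ _ _ [_ ->]]. Qed.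

Lemma S1 : S oneH = oneH.
Proof.
have := ant1 hH oneH.
rewrite (D1 hH (bl_comp (mB hH) (SL hH) (@kl_id _ H))) big_seq1 /= eps1 scale1r.
by rewrite (hmulr1 hH) -(Salpha hH) (a1 hH).
Qed.

Let hg0 : bilinear_map (fun u v => act u (phi (S v))).
Proof. exact: (bl_comp actB (@kl_id _ M) (kl_comp phiL (SL hH))). Qed.

Lemma tauL : klinear (tau act phi S rhoM).
Proof. exact: (ev_lin rhoL hg0). Qed.

Lemma muinvL : klinear muinv. Proof. exact: kl_inv muL muK muKV. Qed.

Lemma tau_mu m : tau act phi S rhoM (mu m) = mu (tau act phi S rhoM m).
Proof.
rewrite /tau (rho_mu m hg0) big_map (kl_sum _ _ muL); apply: eq_bigr => p _ /=.
by rewrite (Salpha hH) phi_alpha mu_act.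
Qed.

Lemma tau_id m : coinv oneH muinv rhoM m -> tau act phi S rhoM m = m.
Proof.
by move=> hm; rewrite /tau (hm _ _ hg0) big_seq1 /= S1 phi1 act1 muKV.
Qed.

Lemma tau_coinv m : coinv oneH muinv rhoM (tau act phi S rhoM m).
Proof.
have SL := SL hH; have aL := aL hH.
move=> W f hf; rewrite big_seq1 /=.
have hr := ev_lin rhoL hf.
rewrite {1}/tau.
have /= -> := kl_sum (rhoM m) (fun p => act p.1 (phi (S p.2))) hr.
transitivity (\sum_(p <- rhoM m) \sum_(p' <- rhoM p.1) \sum_(q <- Delta p.2)
    f (act p'.1 (phi (S q.2))) (mulH p'.2 (S q.1))).
  apply: eq_bigr => p _.
  rewrite (rho_act p.1 (phi (S p.2)) hf) big_allpairs_dep /=; apply: eq_bigr => p' _.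
  rewrite (phi_rho (S p.2) (bl_comp hf (bl2 p'.1 actB) (mulR hH p'.2))) big_map /=.
  exact: (anti_comultE hH _ (bl_comp hf (kl_comp (bl2 p'.1 actB) phiL) (mulR hH p'.2))).
pose T x y c := \sum_(q <- Delta (alpha c)) f (act x (phi (S q.2))) (mulH y (S q.1)).
have hT : trilinear_map T.
  split=> [y c|x c|x y].
  - by apply: kl_sumf => q; exact: (kl_comp (bl1 _ hf) (bl1 _ actB)).
  - by apply: kl_sumf => q; exact: (kl_comp (bl2 _ hf) (mulL hH _)).
  - exact: (kl_comp (ev_lin (DL hH) (bl_swap (bl_comp hf
        (kl_comp (bl2 x actB) (kl_comp phiL SL)) (kl_comp (mulR hH y) SL)))) aL).
transitivity (\sum_(p <- rhoM m) \sum_(p' <- rhoM p.1) T p'.1 p'.2 (alphainv p.2)).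
  by apply: eq_bigr => p _; apply: eq_bigr => p' _; rewrite /T (ainvE hH) (aa hH).
have := rho_coa m hT; rewrite !big_allpairs_dep /= => ->.
rewrite /T.
transitivity (\sum_(p <- rhoM m) f (act (muinv p.1) (phi (S (alpha p.2)))) oneH).
  apply: eq_bigr => p _.
  set X := muinv p.1.
  pose T3 a b c := f (act X (phi (S (alpha c)))) (mulH (alpha a) (S (alpha b))).
  have hT3 : trilinear_map T3.
    split=> [b c|a c|a b]; rewrite /T3.
    - exact: (kl_comp (bl2 _ hf) (kl_comp (mulL hH _) aL)).
    - exact: (kl_comp (bl2 _ hf) (kl_comp (mulR hH _) (kl_comp SL aL))).
    - exact: (kl_comp (bl1 _ hf) (kl_comp (bl2 X actB) (kl_comp phiL (kl_comp SL aL)))).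
  transitivity (\sum_(q <- Delta p.2) \sum_(r <- Delta q.2) T3 (alpha q.1) r.1 r.2).
    apply: eq_bigr => q _.
    rewrite (Dalpha hH q.2 (bl_swap (bl_comp hf
        (kl_comp (bl2 X actB) (kl_comp phiL SL)) (kl_comp (mulR hH q.1) SL)))) big_map /=.
    by apply: eq_bigr => r _; rewrite /T3 (aa hH).
  rewrite (coassA hH _ hT3) /T3.
  transitivity (\sum_(q <- Delta p.2) eps q.1 *: f (act X (phi (S q.2))) oneH).
    apply: eq_bigr => q _; rewrite (aa hH).
    transitivity (\sum_(r <- Delta q.1) f (act X (phi (S q.2))) (alpha (mulH r.1 (S r.2)))).
      by apply: eq_bigr => r _; rewrite (Salpha hH r.2) (amul hH).
    have /= <- := kl_sum (Delta q.1) (fun r => mulH r.1 (S r.2)) (kl_comp (bl2 (act X (phi (S q.2))) hf) aL).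
    by rewrite (ant2 hH) (klZ _ _ aL) (a1 hH) (klZ _ _ (bl2 _ hf)).
  have hl : klinear (fun u => f (act X (phi (S u))) oneH).
    exact: (kl_comp (bl1 _ hf) (kl_comp (bl2 X actB) (kl_comp phiL SL))).
  have /= := kl_sum (Delta p.2) (fun q => eps q.1 *: q.2) hl.
  rewrite (cu1 hH) (ainvE hH) => ->.
  by apply: eq_bigr => q _; have /= -> := klZ (eps q.1) q.2 hl.
rewrite /tau.
have /= -> := kl_sum (rhoM m) (fun p => act p.1 (phi (S p.2))) (kl_comp (bl1 oneH hf) muinvL).
apply: eq_bigr => p _; congr (f _ oneH).
apply: (can_inj muK); rewrite muKV mu_act muKV -phi_alpha (Salpha hH) (aa hH).
by [].
Qed.

Lemma tau_right m c : (forall h a, mulA (phi h) a = mulA a (phi h)) ->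
  (forall x, beta (betainv x) = x) ->
  coinv oneH betainv rhoA c -> tau act phi S rhoM (act m c) = act (tau act phi S rhoM m) c.
Proof.
move=> hc bK hC; rewrite /tau (rho_act m c hg0) big_allpairs_dep /=.
have /= -> := kl_sum (rhoM m) (fun p => act p.1 (phi (S p.2))) (bl1 c actB).
apply: eq_bigr => p _.
rewrite (hC _ _ (bl_comp actB (bl2 p.1 actB) (kl_comp phiL (kl_comp (SL hH) (mulR hH p.2))))).
rewrite big_seq1 /= (hmulr1 hH) (Salpha hH) phi_alpha act_assoc -hc -act_assoc.
by rewrite bK.
Qed.

End Mod.


Section AA.
Variables (k : comPzRingType) (H : lmodType k) (mulH : H -> H -> H) (oneH : H)
  (Delta : H -> seq (H * H)) (eps : H -> k) (alpha alphainv S : H -> H).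
Hypothesis hH : hom_hopf mulH oneH Delta eps alpha alphainv S.
Variables (A : lmodType k) (mulA : A -> A -> A) (oneA : A) (beta betainv : A -> A)
  (rhoA : A -> seq (A * H)).
Hypothesis hA : right_hom_comodule_algebra mulH oneH Delta eps alpha alphainv
          mulA oneA beta betainv rhoA.
Variable phi : H -> A.
Hypothesis hphi : total_integral oneH Delta alpha oneA beta rhoA phi.

Lemma bL : klinear beta. Proof. by case: hA => [[[]]]. Qed.
Lemma bK : cancel beta betainv. Proof. by case: hA => [[[]]]. Qed.
Lemma bKV : cancel betainv beta. Proof. by case: hA => [[[]]]. Qed.
Lemma mAB : bilinear_map mulA. Proof. by case: hA => [[]]. Qed.
Lemma massocA a b c : mulA (beta a) (mulA b c) = mulA (mulA a b) (beta c).
Proof. by case: hA => [[_ _ _ _ [h _]]]. Qed.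
Lemma rhoA_mul a b : teq2 (rhoA (mulA a b))
                       [seq (mulA p.1 q.1, mulH p.2 q.2) | p <- rhoA a, q <- rhoA b].
Proof. by case: hA. Qed.

Lemma A_rel : relative_hom_hopf_module mulH Delta eps alpha alphainv
   mulA oneA beta rhoA beta betainv mulA rhoA.
Proof.
case: hA => [[aut mB' bm b1 [ass un]] com rm r1]; split => //.
split => //.
by move=> m; case: (un m).
Qed.

Lemma tauA_left c b : coinv oneH betainv rhoA c ->
  tau mulA phi S rhoA (mulA c b) = mulA c (tau mulA phi S rhoA b).
Proof.
move=> hC.
have hg : bilinear_map (fun u v => mulA u (phi (S v))).
  exact: (bl_comp mAB (@kl_id _ A) (kl_comp (phiL hphi) (SL hH))).
rewrite /tau (rhoA_mul c b hg) big_allpairs_dep /=.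
rewrite (hC _ (fun u v => \sum_(q <- rhoA b) mulA (mulA u q.1) (phi (S (mulH v q.2))))); last first.
  apply: bl_sum => q; apply: (bl_comp mAB (bl1 q.1 mAB)).
  exact: (kl_comp (phiL hphi) (kl_comp (SL hH) (bl1 q.2 (mB hH)))).
rewrite big_seq1 /= (kl_sum _ _ (bl2 c mAB)); apply: eq_bigr => q _.
by rewrite (hmul1r hH) (Salpha hH) (phi_alpha hphi) -massocA bKV.
Qed.

End AA.

Unset Implicit Arguments.

Theorem proposition4p5 (k : comPzRingType)
  (H : lmodType k) (mulH : H -> H -> H) (oneH : H) (DeltaH : H -> seq (H * H))
  (epsH : H -> k) (alpha alphainv S : H -> H)
  (hH : hom_hopf mulH oneH DeltaH epsH alpha alphainv S)
  (A : lmodType k) (mulA : A -> A -> A) (oneA : A) (beta betainv : A -> A)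
  (rhoA : A -> seq (A * H))
  (hA : right_hom_comodule_algebra mulH oneH DeltaH epsH alpha alphainv
          mulA oneA beta betainv rhoA)
  (phi : H -> A)
  (hphi : total_integral oneH DeltaH alpha oneA beta rhoA phi)
  (hphi_mul : forall h g, phi (mulH h g) = mulA (phi h) (phi g))
  (M : lmodType k) (mu muinv : M -> M) (act : M -> A -> M) (rhoM : M -> seq (M * H))
  (hM : relative_hom_hopf_module mulH DeltaH epsH alpha alphainv
          mulA oneA beta rhoA mu muinv act rhoM) :
  let M0 := coinv oneH muinv rhoM in
  let C := coinv oneH betainv rhoA in
  let tauM := tau act phi S rhoM in
  let tauA := tau mulA phi S rhoA in
  (* (1) *)
  ((forall m, M0 (tauM m)) /\ (forall m, M0 m -> tauM m = m)) /\
  (* (2) tau_A : A -> C is a morphism of left (C,beta)-Hom-modules ... *)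
  ((forall b, C (tauA b)) /\ klinear tauA /\
   (forall b, tauA (beta b) = beta (tauA b)) /\
   (forall c b, C c -> tauA (mulA c b) = mulA c (tauA b)) /\
   (* ... which is a retraction of the inclusion C -> A *)
   (forall c, C c -> tauA c = c) /\
   (* so (C,beta) is a direct summand of (A,beta) as left (C,beta)-Hom-module *)
   (exists N : A -> Prop,
      [/\ N 0, (forall a x y, N x -> N y -> N (a *: x + y)),
          (forall x, N x -> N (beta x) /\ N (betainv x)),
          (forall c x, C c -> N x -> N (mulA c x)) &
          forall b, exists! p : A * A, [/\ C p.1, N p.2 & b = p.1 + p.2]])) /\
  (* (3) *)
  ((forall h a, mulA (phi h) a = mulA a (phi h)) ->
   klinear tauM /\
   (forall m, tauM (mu m) = mu (tauM m)) /\
   (forall m c, C c -> tauM (act m c) = act (tauM m) c) /\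
   (* the sequence M --tauM--> M0 --> 0 splits as right (C,beta)-Hom-modules *)
   (exists s : M -> M,
      [/\ forall m, M0 m -> tauM (s m) = m,
          forall a m n, M0 m -> M0 n -> s (a *: m + n) = a *: s m + s n,
          forall m, M0 m -> s (mu m) = mu (s m) &
          forall m c, M0 m -> C c -> s (act m c) = act (s m) c])).
Proof.
move=> M0 C tauM tauA.
have hAr := A_rel hA.
have tAL : klinear tauA := tauL hH hphi hAr.
have tAC : forall b, C (tauA b) by move=> b W f hf; exact: (tau_coinv hH hphi hAr b hf).
have tAid : forall c, C c -> tauA c = c by move=> c hc; exact: (tau_id hH hphi hAr hc).
have tAmu : forall b, tauA (beta b) = beta (tauA b) := tau_mu hH hphi hAr.
split; first by split; [move=> m W f hf; exact: (tau_coinv hH hphi hM m hf) | move=> m hm; exact: (tau_id hH hphi hM hm)].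
split.
  split; first exact: tAC.
  split; first exact: tAL.
  split; first exact: tAmu.
  split; first by move=> c b hc; exact: (tauA_left hH hA hphi b hc).
  split; first exact: tAid.
  exists (fun x => tauA x = 0); split.
  - exact: kl0 tAL.
  - by move=> a x y hx hy; rewrite tAL hx hy scaler0 addr0.
  - move=> x hx; split; first by rewrite tAmu hx (kl0 (bL hA)).
    have biL := kl_inv (bL hA) (bK hA) (bKV hA).
    by rewrite -[tauA _](bK hA) -tAmu (bKV hA) hx (kl0 biL).
  - move=> c x hc hx; have := tauA_left hH hA hphi x hc; rewrite -/tauA => ->.
    by rewrite hx (kl0 (bl2 c (mAB hA))).
  - move=> b; exists (tauA b, b - tauA b); split.
      split => //=.
        by rewrite (klB _ _ tAL) (tAid _ (tAC b)) subrr.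
      by rewrite addrC subrK.
    case=> c n [/= hc hn ->].
    by rewrite (klD _ _ tAL) tAid // hn addr0 addrAC subrr add0r.
move=> hcen; split; first exact (tauL hH hphi hM).
split; first exact (tau_mu hH hphi hM).
split; first by move=> m c hc; apply: (tau_right hH hphi hM m hcen (bKV hA) hc).
exists id; split => //.
by move=> m hm; exact (tau_id hH hphi hM hm).
Qed.
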